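(* Let $\Sigma^*$ be an $n\times n$ positive definite matrix whose conditional independence structure is a tree $T^*$ on $\{1,\dots,n\}$, let $D^*$ be a diagonal matrix with nonnegative diagonal entries, and let $\Sigma^o=\Sigma^*+D^*$. Suppose $\Sigma^o=\Sigma'+D'$ where $\Sigma'$ is an $n\times n$ positive definite matrix whose conditional independence structure is a tree $T'$ and $D'$ is a diagonal matrix with nonnegative diagonal entries. Then $T'\in\mathcal{T}_{T^*}$.
   Context: For an $n\times n$ positive definite matrix $\Sigma$ with inverse $\Omega=\Sigma^{-1}$, its conditional independence structure is the graph on $\{1,\dots,n\}$ with an edge $\{i,j\}$ ($i\neq j$) iff $\Omega_{ij}\neq 0$. Let $\mathcal{L}$ be the set of leaves of $T^*$. For a subset $\mathcal{S}\subseteq\mathcal{L}$ in which no two leaves share a common neighbor, let $T^{\mathcal{S}}$ be the tree obtained from $T^*$ by exchanging the position of each leaf $a\in\mathcal{S}$ with its unique neighbor (i.e. the image of $T^*$ under the permutation of labels swapping each such leaf with its neighbor). $\mathcal{T}_{T^*}$ is the set of all trees $T^{\mathcal{S}}$ over all such subsets $\mathcal{S}$. *)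

(* Defs.v *)
From mathcomp Require Import all_boot all_order all_algebra all_fingroup.
From mathcomp Require Import reals.
Set Implicit Arguments. Unset Strict Implicit. Unset Printing Implicit Defensive.
Import Order.TTheory GRing.Theory Num.Theory.
Local Open Scope ring_scope.

Definition posdef (R : realType) (n : nat) (A : 'M[R]_n) : Prop :=
  A^T = A /\ forall x : 'cV[R]_n, x != 0 -> 0 < (x^T *m A *m x) 0 0.

Definition nonneg_diag (R : realType) (n : nat) (D : 'M[R]_n) : Prop :=
  is_diag_mx D /\ forall i, 0 <= D i i.

Definition ci_graph (R : realType) (n : nat) (S : 'M[R]_n) : rel 'I_n :=
  fun i j => (i != j) && (invmx S i j != 0).

Definition simple_graph (n : nat) (E : rel 'I_n) : Prop :=
  symmetric E /\ irreflexive E.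

Definition graph_connected (n : nat) (E : rel 'I_n) : Prop :=
  forall i j, connect E i j.

Definition graph_acyclic (n : nat) (E : rel 'I_n) : Prop :=
  forall p : seq 'I_n, uniq p -> (3 <= size p)%N -> ~~ path.cycle E p.

Definition is_tree (n : nat) (E : rel 'I_n) : Prop :=
  [/\ simple_graph E, graph_connected E & graph_acyclic E].

Definition is_leaf (n : nat) (E : rel 'I_n) (a : 'I_n) : bool :=
  #|[set b | E a b]| == 1%N.

(* T' belongs to the family T_{T*}: there is a set S of leaves of T*, no two of
   which share a common neighbour, and a permutation pi of the labels that swaps
   each leaf a in S with its unique neighbour and fixes all other vertices, such
   that T' is the image of T* under pi. *)
Definition in_swap_family (n : nat) (Tstar T' : rel 'I_n) : Prop :=
  exists S : {set 'I_n},
    [/\ (forall a, a \in S -> is_leaf Tstar a),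
        (forall a a' c, a \in S -> a' \in S -> a != a' -> Tstar a c -> ~~ Tstar a' c)
      & exists pi : {perm 'I_n},
        [/\ (forall a b, a \in S -> Tstar a b -> pi a = b /\ pi b = a),
            (forall v, v \notin S -> (forall a, a \in S -> ~~ Tstar a v) -> pi v = v)
          & (forall i j, T' (pi i) (pi j) = Tstar i j)]].

(* Main.v *)
Require Import Defs.
From mathcomp Require Import all_boot all_order all_algebra all_fingroup.
From mathcomp Require Import reals.
From mathcomp Require Import ring lra.
Set Implicit Arguments. Unset Strict Implicit. Unset Printing Implicit Defensive.
Import Order.TTheory GRing.Theory Num.Theory.
Local Open Scope ring_scope.

Lemma connect_ind (T : finType) (e : rel T) (P : pred T) x y :
  P x -> (forall a b, P a -> e a b -> P b) -> connect e x y -> P y.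
Proof.
move=> Px step /connectP [p pth ->]; elim: p x Px pth => //= a p IH x Px.
by case/andP=> exa pa; apply: IH (step _ _ Px exa) pa.
Qed.

Section Graph.
Variables (n : nat) (e : rel 'I_n).
Hypothesis HT : is_tree e.
Let T := 'I_n.
Let Hsym : symmetric e. Proof. by case: HT => [[]]. Qed.
Let Hirr : irreflexive e. Proof. by case: HT => [[]]. Qed.
Let Hconn : forall i j, connect e i j. Proof. by case: HT. Qed.
Let Hacyc : forall p : seq T, uniq p -> (3 <= size p)%N -> ~~ path.cycle e p.
Proof. by case: HT. Qed.

Definition ew (z : T) : rel T := fun x y => [&& e x y, x != z & y != z].
Definition tcomp z u : {set T} := [set x | connect (ew z) u x].

Lemma ew_sym z : symmetric (ew z).
Proof. by move=> x y; rewrite /ew Hsym; case: (e y x); case: (x != z); case: (y != z). Qed.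

Lemma connect_ew_sym z x y : connect (ew z) x y = connect (ew z) y x.
Proof. exact: (sym_connect_sym (ew_sym z)). Qed.

Lemma comp_avoid z u x : u != z -> x \in tcomp z u -> x != z.
Proof.
move=> uz; rewrite inE; apply: (connect_ind (P := fun w => w != z)) => //.
by move=> a b _ /and3P[].
Qed.

Lemma ew_e z x y : ew z x y -> e x y.
Proof. by case/and3P. Qed.

Lemma nbr_in_comp z u : u != z -> exists2 m, e z m & m \in tcomp z u.
Proof.
move=> uz; case: (boolP [exists m, e z m && (m \in tcomp z u)]).
  by case/existsP=> m /andP[]; exists m.
move=> /existsPn nex.
have : z \in tcomp z u.
  apply: (connect_ind (P := fun w => w \in tcomp z u)) (Hconn u z).
    by rewrite inE connect0.
  move=> a b ain eab; have az := comp_avoid uz ain.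
  case: (eqVneq b z) => [bz|bz].
    by move: (nex a); rewrite bz in eab; rewrite Hsym eab ain.
  by move: ain; rewrite !inE => cua; apply: connect_trans cua (connect1 _); rewrite /ew eab az bz.
by move/(comp_avoid uz); rewrite eqxx.
Qed.

Lemma path_avoid z x p : path (ew z) x p -> all (fun y => y != z) p.
Proof.
elim: p x => //= a p IH x /andP[/and3P[_ _ az] pa]; by rewrite az (IH a).
Qed.

Lemma nbr_uniq z u m m' : e z m -> e z m' -> m \in tcomp z u -> m' \in tcomp z u -> m = m'.
Proof.
move=> ezm ezm' mc m'c; apply/eqP; apply: contraT => mm'.
have mz : m != z by apply/eqP => mz; move: ezm; rewrite mz Hirr.
have : connect (ew z) m m'.
  by move: mc m'c; rewrite !inE => a b; apply: connect_trans b; rewrite connect_ew_sym.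
case/connectP=> p pth; case: (shortenP pth) => p' pth' uq _ lst.
have p'n : p' != [::] by apply: contraNneq mm' => p0; rewrite lst p0.
have := Hacyc (p := z :: m :: p').
have av := path_avoid pth'.
rewrite /= in uq *; case/andP: uq => mp' -> .
have zp : z \notin p' by apply/negP => /(allP av); rewrite eqxx.
rewrite inE negb_or eq_sym mz zp mp' /= => /(_ isT).
have -> : (3 <= (size p').+2)%N by case: p' p'n {pth' mp' av zp lst}.
rewrite ezm /= => /(_ isT) /negP H; exfalso; apply: H.
by rewrite rcons_path (sub_path (@ew_e z) pth') /= -lst Hsym.
Qed.

Lemma comp_sub z u m x : u != z -> e z m -> m \in tcomp z u -> x \in tcomp z u ->
  x != m -> tcomp m x \subset tcomp z u :\ m.
Proof.
move=> uz ezm mc xc xm; apply/subsetP => y; rewrite inE => cxy.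
rewrite in_setD1.
apply: (connect_ind (P := fun w => (w != m) && (w \in tcomp z u))) cxy; first by rewrite xm.
move=> a b /andP[am ac] /and3P[eab _ bm]; rewrite bm /=.
have az := comp_avoid uz ac.
case: (eqVneq b z) => [bz|bz].
  by move: eab; rewrite bz Hsym => eza; move: am; rewrite (nbr_uniq eza ezm ac mc) eqxx.
by move: ac; rewrite !inE => cua; apply: connect_trans cua (connect1 _); rewrite /ew eab az bz.
Qed.

Lemma comp_lt z u m x : u != z -> e z m -> m \in tcomp z u -> x \in tcomp z u ->
  x != m -> (#|tcomp m x| < #|tcomp z u|)%N.
Proof.
move=> uz ezm mc xc xm.
apply: (leq_ltn_trans (subset_leq_card (comp_sub uz ezm mc xc xm))).
by rewrite [X in (_ < X)%N](cardsD1 m) mc.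
Qed.

Lemma comp_notin z u m x : u != z -> e z m -> m \in tcomp z u -> x \in tcomp z u ->
  x != m -> ~~ connect (ew m) x z.
Proof.
move=> uz ezm mc xc xm; apply/negP => cz.
have : z \in tcomp m x by rewrite inE.
move/(subsetP (comp_sub uz ezm mc xc xm)); rewrite in_setD1 => /andP[_].
by move/(comp_avoid uz); rewrite eqxx.
Qed.

Lemma leaf_comp z p : (forall y, e z y -> y = p) -> forall u v, u != z -> v != z ->
  connect (ew z) u v.
Proof.
move=> lf u v uz vz.
case: (nbr_in_comp uz) => m1 /lf -> c1.
case: (nbr_in_comp vz) => m2 /lf -> c2.
by move: c1 c2; rewrite !inE => c1 c2; apply: connect_trans c1 _; rewrite connect_ew_sym.
Qed.

Lemma two_nbrs_sep z x y : e z x -> e z y -> x != y -> ~~ connect (ew z) x y.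
Proof.
move=> ezx ezy xy; apply/negP => cxy.
have xz : x != z by apply/eqP => xz; move: ezx; rewrite xz Hirr.
have := nbr_uniq ezx ezy (_ : x \in tcomp z x) (_ : y \in tcomp z x).
by rewrite !inE connect0 cxy => /(_ isT isT) /eqP; rewrite (negbTE xy).
Qed.

Lemma comp_of_leaf z p : (forall y, e z y -> y = p) -> forall y, connect (ew p) z y -> y = z.
Proof.
move=> lf y c; apply/eqP; move: c.
apply: (connect_ind (P := fun w => w == z)) => // a b /eqP -> /and3P[ezb _ bp].
by move: bp; rewrite (lf _ ezb) eqxx.
Qed.

Lemma nonedge_sep u v : u != v -> ~~ e u v ->
  exists z, [/\ z != u, z != v & ~~ connect (ew z) u v].
Proof.
move=> uv neuv; have vu : u != v by [].
case: (nbr_in_comp uv) => m evm mc.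
have mu : m != u by apply/eqP => mu; move: neuv; rewrite -mu Hsym evm.
have mv : m != v by apply/eqP => mv; move: evm; rewrite mv Hirr.
exists m; split => //.
have uc : u \in tcomp v u by rewrite inE connect0.
have um : u != m by rewrite eq_sym.
have sub := comp_sub uv evm mc uc um.
apply/negP => cuv; have : v \in tcomp m u by rewrite inE.
move/(subsetP sub); rewrite in_setD1 => /andP[_] /(comp_avoid uv); by rewrite eqxx.
Qed.

Lemma exists_nbr z u : u != z -> exists m, e z m.
Proof. by move=> uz; case: (nbr_in_comp uz) => m ezm _; exists m. Qed.
End Graph.



Definition good (R : realType) (n : nat) (S : 'M[R]_n) :=
  posdef S /\ is_tree (ci_graph S).

Definition sepS (R : realType) (n : nat) (S : 'M[R]_n) z u v :=
  S u z * S z v == S u v * S z z.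

Definition internal (R : realType) (n : nat) (S : 'M[R]_n) z :=
  [exists u, exists v, [&& u != z, v != z, u != v & sepS S z u v]].

Lemma sum_delta (R : realType) (n : nat) (f : 'I_n -> R) i :
  \sum_j f j * (j == i)%:R = f i.
Proof.
rewrite (bigD1 i) //= eqxx mulr1 big1 ?addr0 // => j /negbTE ->; by rewrite mulr0.
Qed.

Section Cov.
Variables (R : realType) (n : nat) (S : 'M[R]_n).
Hypothesis H : good S.
Let HS : posdef S := H.1.
Let HT : is_tree (ci_graph S) := H.2.
Local Notation T := (ci_graph S).
Local Notation Om := (invmx S).

Lemma S_sym i j : S i j = S j i.
Proof. by case: HS => h _; rewrite -{1}h mxE. Qed.

Lemma quad_sum (A : 'M[R]_n) (x : 'cV[R]_n) :
  (x^T *m A *m x) 0 0 = \sum_i x i 0 * (A *m x) i 0.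
Proof. by rewrite -mulmxA mxE; apply: eq_bigr => i _; rewrite mxE. Qed.

Lemma S_unit : S \in unitmx.
Proof.
apply: contraT => nu.
have : kermx S != 0 by rewrite kermx_eq0 row_free_unit.
case/matrix0Pn => i [j kij].
set y := row i (kermx S).
have yS : y *m S = 0.
  rewrite /y -row_mul.
  rewrite mulmx_ker.
  by rewrite row0.
have x0 : y^T != 0.
  apply/matrix0Pn; exists j; exists 0; by rewrite !mxE in kij *.
by have := HS.2 _ x0; rewrite trmxK yS mul0mx mxE ltxx.
Qed.

Lemma diag_pos i : 0 < S i i.
Proof.
pose x : 'cV[R]_n := \col_j ((j == i)%:R).
have x0 : x != 0 by apply/matrix0Pn; exists i; exists 0; rewrite !mxE eqxx oner_neq0.
have := HS.2 _ x0; rewrite quad_sum.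
have -> : \sum_a x a 0 * (S *m x) a 0 = S i i; last by [].
transitivity (\sum_a S a i * (a == i)%:R); last by rewrite sum_delta.
apply: eq_bigr => a _; rewrite !mxE mulrC; congr (_ * _).
by under eq_bigr do rewrite mxE; rewrite sum_delta.
Qed.

Lemma diag_neq0 i : S i i != 0.
Proof. by rewrite gt_eqF ?diag_pos. Qed.

Lemma CS i j : i != j -> S i j ^+ 2 < S i i * S j j.
Proof.
move=> ij.
pose x : 'cV[R]_n := \col_k ((k == i)%:R * S j j - (k == j)%:R * S i j).
have hx : forall f : 'I_n -> R, \sum_b f b * x b 0 = f i * S j j - f j * S i j.
  move=> f.
  transitivity (\sum_b f b * (b == i)%:R * S j j - \sum_b f b * (b == j)%:R * S i j).
    by rewrite -sumrB; apply: eq_bigr => b _; rewrite mxE; ring.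
  by rewrite -!mulr_suml !sum_delta.
have x0 : x != 0.
  apply/matrix0Pn; exists i; exists 0; rewrite !mxE eqxx (negbTE ij) mul0r subr0 mul1r.
  exact: diag_neq0.
have := HS.2 _ x0; rewrite quad_sum.
have -> : \sum_a x a 0 * (S *m x) a 0 = S j j * (S i i * S j j - S i j ^+ 2).
  transitivity (\sum_a (S a i * S j j - S a j * S i j) * x a 0).
    apply: eq_bigr => a _; rewrite mulrC; congr (_ * _).
    by rewrite mxE hx.
  by rewrite hx (S_sym j i); ring.
rewrite pmulr_rgt0 ?diag_pos // subr_gt0 //.
Qed.

Lemma OmS a c : \sum_b Om a b * S b c = (a == c)%:R.
Proof. by have := congr1 (fun M : 'M[R]_n => M a c) (mulVmx S_unit); rewrite !mxE. Qed.

Lemma Om_sym : Om^T = Om.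
Proof. by rewrite trmx_inv HS.1. Qed.

Lemma Om_pd (w : 'cV[R]_n) : w != 0 -> 0 < (w^T *m Om *m w) 0 0.
Proof.
move=> w0; set y := Om *m w.
have y0 : y != 0.
  apply: contraNneq w0 => y0.
  by rewrite -[w]mul1mx -(mulmxV S_unit) -mulmxA -/y y0 mulmx0.
have := HS.2 _ y0.
have -> : y^T *m S *m y = w^T *m Om *m w; last by [].
rewrite /y trmx_mul Om_sym !mulmxA -[w^T *m Om *m S]mulmxA mulVmx ?S_unit //.
by rewrite mulmx1.
Qed.

Lemma kill (w : 'cV[R]_n) : (forall a, w a 0 = 0 \/ (Om *m w) a 0 = 0) -> w = 0.
Proof.
move=> h; apply/eqP; apply: contraT => /Om_pd; rewrite quad_sum big1 ?ltxx // => a _.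
by case: (h a) => ->; rewrite ?mul0r ?mulr0.
Qed.

Lemma Om0 a b : a != b -> ~~ T a b -> Om a b = 0.
Proof. by rewrite /ci_graph => ab; rewrite ab /= negbK => /eqP. Qed.

Lemma Tsym : symmetric T.
Proof. by case: HT => [[]]. Qed.

Lemma Tneq a b : T a b -> a != b.
Proof. by case/andP. Qed.

Lemma sepF z u v : u != z -> v != z -> ~~ connect (ew T z) u v ->
  S u z * S z v = S u v * S z z.
Proof.
move=> uz vz nc.
set A := tcomp T z u.
pose y b := S z z * S b v - S z v * S b z.
pose w : 'cV[R]_n := \col_b (if b \in A then y b else 0).
have Hw : w = 0.
  apply: kill => a; rewrite !mxE.
  case: ifP => aA; [right | by left].
  have az := comp_avoid uz aA.
  have av : a != v by apply: contraNneq nc => <-; move: aA; rewrite inE.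
  transitivity (\sum_b Om a b * y b).
    apply: eq_bigr => b _; rewrite mxE; case: ifP => bA //.
    case: (eqVneq b z) => [->|bz]; first by rewrite /y [S z z * _]mulrC subrr.
    suff -> : Om a b = 0 by rewrite !mul0r.
    apply: Om0; first by apply: contraFneq bA => <-.
    apply/negP => Tab; move: bA; rewrite inE.
    move: aA; rewrite inE => aA; rewrite (connect_trans aA (connect1 _)) //.
    by rewrite /ew Tab az bz.
  have -> : \sum_b Om a b * y b =
      S z z * (\sum_b Om a b * S b v) - S z v * (\sum_b Om a b * S b z).
    by rewrite !mulr_sumr -sumrB; apply: eq_bigr => b _; rewrite /y; ring.
  by rewrite !OmS (negbTE az) (negbTE av) !mulr0 subrr.
have := congr1 (fun M : 'cV[R]_n => M u 0) Hw.
rewrite !mxE (_ : u \in A) ?inE ?connect0 // /y => /eqP; rewrite subr_eq0 => /eqP h.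
by rewrite [LHS]mulrC [RHS]mulrC -h.
Qed.


Lemma edge_nz u v : T u v -> S u v != 0.
Proof.
move=> Tuv; have uv := Tneq Tuv; have vu : v != u by rewrite eq_sym.
set B := tcomp T u v.
apply/negP => /eqP Suv0; have Svu0 : S v u = 0 by rewrite S_sym.
pose w : 'cV[R]_n := \col_b (if b \in B then S b u else 0).
have vB : v \in B by rewrite inE connect0.
have Hw : w = 0.
  apply: kill => a; rewrite !mxE; case: ifP => aB; last by left.
  case: (eqVneq a v) => [->|av]; first by left.
  right.
  have au : a != u := comp_avoid vu aB.
  transitivity (\sum_b Om a b * S b u).
    apply: eq_bigr => b _; rewrite mxE; case: ifP => bB //.
    suff -> : Om a b = 0 by rewrite !mul0r.
    apply: Om0; first by apply: contraFneq bB => <-.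
    apply/negP => Tab; case: (eqVneq b u) => [bu|bu].
      rewrite bu Tsym in Tab.
      by move: av; rewrite (nbr_uniq HT Tab Tuv aB vB) eqxx.
    move: bB; rewrite inE; move: aB; rewrite inE => aB.
    by rewrite (connect_trans aB (connect1 _)) // /ew Tab au bu.
  by rewrite OmS (negbTE au).
have hc : forall c, c \in B -> S c u = 0.
  by move=> c cB; have := congr1 (fun M : 'cV[R]_n => M c 0) Hw; rewrite !mxE cB.
have := OmS v u; rewrite (negbTE vu) (bigD1 u) //= big1 ?addr0.
  move/eqP; rewrite mulf_eq0 (negbTE (diag_neq0 u)) orbF.
  by move=> /eqP h0; move: Tuv; rewrite Tsym /ci_graph h0 eqxx andbF.
move=> c cu; case: (boolP (c \in B)) => cB; first by rewrite hc // mulr0.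
suff -> : Om v c = 0 by rewrite mul0r.
apply: Om0; first by apply: contraNneq cB => <-.
apply/negP => Tvc; move: cB; rewrite inE (connect1 (_ : ew T u v c)) //.
by rewrite /ew Tvc vu cu.
Qed.

Lemma nz_all u v : S u v != 0.
Proof.
case: (eqVneq u v) => [->|uv]; first exact: diag_neq0.
suff: forall k u v, u != v -> (#|tcomp T v u| <= k)%N -> S u v != 0.
  by move/(_ _ u v uv (leqnn _)).
clear u v uv; elim=> [|k IH] u v uv.
  rewrite leqn0 => /eqP/cards0_eq h.
  have : u \in tcomp T v u by rewrite inE connect0.
  by rewrite h inE.
move=> hk.
case: (nbr_in_comp HT uv) => m Tvm mc.
case: (eqVneq m u) => [mu|mu].
  by rewrite -mu S_sym; apply: edge_nz.
have uc : u \in tcomp T v u by rewrite inE connect0.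
have um : u != m by rewrite eq_sym.
have nc := comp_notin HT uv Tvm mc uc um.
have vm : v != m := Tneq Tvm.
have e := sepF um vm nc.
have h1 : S u m != 0.
  apply: (IH _ _ um); rewrite -ltnS; apply: (leq_trans _ hk).
  by move: (comp_lt HT uv Tvm mc uc um).
have h2 : S m v != 0 by rewrite S_sym; apply: edge_nz.
apply/negP => /eqP S0; move: e; rewrite S0 mul0r => /eqP.
by rewrite mulf_eq0 (negbTE h1) (negbTE h2).
Qed.

Lemma sameR k z u v : (#|tcomp T z u| <= k)%N -> u != z -> v != z -> u != v ->
  connect (ew T z) u v ->
  exists t, 0 < t < 1 /\ S u z * S z v = t * (S u v * S z z).
Proof.
elim: k z u v => [|k IH] z u v hk uz vz uv cuv.
  move: hk; rewrite leqn0 => /eqP/cards0_eq h.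
  have : u \in tcomp T z u by rewrite inE connect0.
  by rewrite h inE.
case: (nbr_in_comp HT uz) => m Tzm mc.
have mz : m != z by rewrite eq_sym; exact: Tneq Tzm.
have hmm := diag_neq0 m; have hzz := diag_neq0 z.
have Smz : S m z != 0 := nz_all m z.
set t0 := S m z ^+ 2 / (S m m * S z z).
have t0p : 0 < t0 < 1.
  have hp : 0 < S m m * S z z by rewrite mulr_gt0 ?diag_pos.
  apply/andP; split.
    by rewrite divr_gt0 // lt_def sqrf_eq0 Smz sqr_ge0.
  by rewrite ltr_pdivrMr // mul1r CS.
have key : forall x, x \in tcomp T z u -> x != m -> S x z = S x m * S m z / S m m.
  move=> x xc xm; have zm : z != m by rewrite eq_sym.
  have := sepF xm zm (comp_notin HT uz Tzm mc xc xm).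
  by move=> ->; rewrite mulfK.
have vc : v \in tcomp T z u by rewrite inE.
have uc : u \in tcomp T z u by rewrite inE connect0.
case: (eqVneq u m) => [um|um].
  rewrite um in uv *.
  have vm : v != m by rewrite eq_sym.
  exists t0; split => //.
  rewrite [S z v]S_sym (key v vc vm) [S v m]S_sym /t0.
  by field; rewrite hmm hzz.
case: (eqVneq v m) => [vm|vm].
  rewrite vm in uv *.
  exists t0; split => //.
  rewrite [S z m]S_sym (key u uc um) /t0.
  by field; rewrite hmm hzz.
rewrite [S z v]S_sym (key u uc um) (key v vc vm) [S v m]S_sym.
have -> : S u m * S m z / S m m * (S m v * S m z / S m m) =
    (S u m * S m v) * (S m z ^+ 2 / (S m m * S m m)) by field; rewrite hmm.
case: (boolP (connect (ew T m) u v)) => cm.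
  have hk' : (#|tcomp T m u| <= k)%N.
    rewrite -ltnS; apply: (leq_trans _ hk).
    by move: (comp_lt HT uz Tzm mc uc um).
  case: (IH m u v hk' um vm uv cm) => t1 [/andP[t1a t1b] e1].
  exists (t1 * t0); split.
    case/andP: t0p => t0a t0b; apply/andP; split; first by rewrite mulr_gt0.
    by nra.
  rewrite e1 /t0; by field; rewrite hmm hzz.
exists t0; split => //.
rewrite (sepF um vm cm) /t0; by field; rewrite hmm hzz.
Qed.

Lemma sep_iff z u v : u != z -> v != z -> u != v ->
  sepS S z u v = ~~ connect (ew T z) u v.
Proof.
move=> uz vz uv; rewrite /sepS.
case: (boolP (connect (ew T z) u v)) => c /=; last by apply/eqP; apply: sepF.
case: (sameR (leqnn _) uz vz uv c) => t [/andP[t0 t1] ->].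
apply/negP => /eqP h.
have hX : S u v * S z z != 0 by rewrite mulf_neq0 ?nz_all ?diag_neq0.
have : t = 1 by apply: (mulIf hX); rewrite h mul1r.
by move=> t1'; move: t1; rewrite t1' ltxx.
Qed.

Lemma cratio z u v : u != z -> v != z -> u != v ->
  exists t, 0 < t <= 1 /\ S u z * S z v = t * (S u v * S z z).
Proof.
move=> uz vz uv.
case: (boolP (connect (ew T z) u v)) => c.
  case: (sameR (leqnn _) uz vz uv c) => t [/andP[t0 t1] e].
  by exists t; rewrite t0 ltW.
by exists 1; split; [rewrite ltr01 lexx | rewrite mul1r; apply: sepF].
Qed.

Lemma edgeE u v : T u v =
  (u != v) && [forall z, ((z != u) && (z != v)) ==> ~~ sepS S z u v].
Proof.
apply/idP/idP.
  move=> Tuv; rewrite (Tneq Tuv) /=; apply/forallP => z; apply/implyP => /andP[zu zv].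
  have uz : u != z by rewrite eq_sym.
  have vz : v != z by rewrite eq_sym.
  rewrite sep_iff ?(Tneq Tuv) // negbK; apply: connect1.
  by rewrite /ew Tuv uz vz.
case/andP => uv /forallP h; apply: contraT => nT.
case: (nonedge_sep HT uv nT) => z [zu zv nc].
have uz : u != z by rewrite eq_sym.
have vz : v != z by rewrite eq_sym.
by move: (h z); rewrite zu zv /= sep_iff // nc.
Qed.

Lemma leaf_sep b p : (forall y, T b y -> y = p) -> T b p ->
  forall y, y != b -> y != p -> sepS S p b y.
Proof.
move=> lf Tbp y yb yp.
have bp := Tneq Tbp.
have by' : b != y by rewrite eq_sym.
rewrite sep_iff //.
by apply/negP => /(comp_of_leaf lf) /eqP; rewrite (negbTE yb).
Qed.

Lemma leaf_noint b p : (forall y, T b y -> y = p) -> ~~ internal S b.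
Proof.
move=> lf; apply/existsPn => u; apply/existsPn => v; apply/negP => /and4P[ub vb uv].
by rewrite sep_iff // (leaf_comp HT lf ub vb).
Qed.

Lemma two_int z x y : T z x -> T z y -> x != y -> internal S z.
Proof.
move=> Tzx Tzy xy; apply/existsP; exists x; apply/existsP; exists y.
have xz : x != z by rewrite eq_sym (Tneq Tzx).
have yz : y != z by rewrite eq_sym (Tneq Tzy).
by rewrite xz yz xy sep_iff // two_nbrs_sep.
Qed.

Lemma noint_uniq b y y' : ~~ internal S b -> T b y -> T b y' -> y = y'.
Proof.
move=> ni Tby Tby'; apply/eqP; apply: contraNT ni => yy'; exact: two_int Tby Tby' yy'.
Qed.

Lemma int_sepq b q : internal S b -> q != b ->
  exists y, [/\ y != b, y != q & sepS S b q y].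
Proof.
case/existsP => u /existsP [v /and4P [ub vb uv s]] qb; rewrite sep_iff // in s.
case: (boolP (connect (ew T b) q u)) => cqu.
  have nqv : ~~ connect (ew T b) q v.
    apply: contra s => cqv; apply: connect_trans cqv.
    by rewrite connect_ew_sym.
  have vq : v != q by apply: contraNneq nqv => ->; rewrite connect0.
  by exists v; rewrite vb vq sep_iff // eq_sym.
have uq : u != q by apply: contraNneq cqu => ->; rewrite connect0.
by exists u; rewrite ub uq sep_iff // eq_sym.
Qed.

Lemma sep_sym z u v : sepS S z u v = sepS S z v u.
Proof. by rewrite /sepS [S v z]S_sym [S z u]S_sym [S v u]S_sym mulrC. Qed.

End Cov.


Section Alg.
Variable R : realType.
Implicit Types (pb Q qb pq qy py P bq B bp pw bw wv bv W px bx xy byy pv : R).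

Lemma alg1 pb Q pq qb qy py P : pb != 0 -> Q != 0 ->
  pq * qb = pb * Q -> pq * qy = py * Q -> pb * pq = qb * P -> pq * py = qy * P.
Proof.
move=> hpb hQ h1 h2 h3; apply: (mulfI (mulf_neq0 hpb hQ)).
transitivity ((pb * pq) * (py * Q)); first by ring.
rewrite h3 -h2; transitivity ((pq * qb) * (qy * P)); first by ring.
by rewrite h1; ring.
Qed.

Lemma alg2 bq pb pq py byy P B Q : P != 0 -> byy != 0 -> pq != 0 ->
  pb * byy = py * B -> pq * bq = pb * Q -> pb * pq = bq * P -> pb * py = byy * P ->
  bq ^+ 2 = B * Q.
Proof.
move=> hP hby hpq e2 e3 f1 f2.
have star : bq * py = pq * byy.
  apply: (mulIf hP); transitivity (py * (bq * P)); first by ring.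
  rewrite -f1; transitivity (pq * (pb * py)); first by ring.
  by rewrite f2; ring.
have s2 : bq * pb = pq * B.
  apply: (mulIf hby); transitivity (bq * (pb * byy)); first by ring.
  rewrite e2; transitivity (B * (bq * py)); first by ring.
  by rewrite star; ring.
apply: (mulIf hpq); transitivity (bq * (pq * bq)); first by ring.
rewrite e3; transitivity (Q * (bq * pb)); first by ring.
by rewrite s2; ring.
Qed.

Lemma alg3 P bp pw bw pv bv wv W : P != 0 -> bp != 0 ->
  bp * pw = bw * P -> bp * pv = bv * P -> (bw * wv == bv * W) = (pw * wv == pv * W).
Proof.
move=> hP hbp h1 h2.
have e1 : bw * wv * P = bp * (pw * wv) by rewrite mulrAC -h1 mulrA.
have e2 : bv * W * P = bp * (pv * W) by rewrite mulrAC -h2 mulrA.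
by rewrite -(inj_eq (mulIf hP)) e1 e2 (inj_eq (mulfI hbp)).
Qed.

Lemma alg4 P pb px bx B py byy xy : P != 0 -> pb != 0 -> px != 0 ->
  pb * bx = px * B -> pb * px = bx * P -> pb * py = byy * P ->
  (bx * byy == xy * B) = (px * py == xy * P).
Proof.
move=> hP hpb hpx e1 e2 e3.
have K : pb * pb = B * P.
  apply: (mulIf hpx); transitivity (pb * (pb * px)); first by ring.
  by rewrite e2 mulrA e1; ring.
have hK : pb * pb != 0 by rewrite mulf_neq0.
rewrite -(inj_eq (mulIf (mulf_neq0 hP hP))).
have -> : bx * byy * (P * P) = (pb * pb) * (px * py).
  transitivity ((bx * P) * (byy * P)); first by ring.
  by rewrite -e2 -e3; ring.
have -> : xy * B * (P * P) = (pb * pb) * (xy * P) by rewrite K; ring.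
by rewrite (inj_eq (mulfI hK)).
Qed.
End Alg.

Definition offeq (R : realType) (n : nat) (S1 S2 : 'M[R]_n) :=
  forall x y, x != y -> S2 x y = S1 x y.
Definition pairH (R : realType) (n : nat) (S1 S2 : 'M[R]_n) :=
  [/\ good S1, good S2 & offeq S1 S2].

Lemma pairH_sym (R : realType) (n : nat) (S1 S2 : 'M[R]_n) :
  pairH S1 S2 -> pairH S2 S1.
Proof. by case=> g1 g2 o; split => // x y xy; rewrite o. Qed.

Definition nb (R : realType) (n : nat) (S : 'M[R]_n) x := odflt x [pick y | ci_graph S x y].

Lemma noint_sep (R : realType) (n : nat) (S : 'M[R]_n) z u v :
  ~~ internal S z -> u != z -> v != z -> u != v -> sepS S z u v = false.
Proof.
move=> /existsPn /(_ u) /existsPn /(_ v) h uz vz uv; apply/negbTE; move: h.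
by rewrite uz vz uv.
Qed.

Lemma leaf_of (R : realType) (n : nat) (S : 'M[R]_n) b : good S -> ~~ internal S b ->
  (exists u, u != b) -> ci_graph S b (nb S b) /\ forall y, ci_graph S b y -> y = nb S b.
Proof.
move=> G ni [u ub].
have [m Tbm] := exists_nbr G.2 ub.
have Tnb : ci_graph S b (nb S b).
  by rewrite /nb; case: pickP => [y //|/(_ m)]; rewrite Tbm.
by split => // y Tby; move: (noint_uniq G ni Tby Tnb).
Qed.

Section P1.
Variables (R : realType) (n : nat) (S1 S2 : 'M[R]_n).
Hypothesis H : pairH S1 S2.
Let G1 : good S1 := let: And3 g _ _ := H in g.
Let G2 : good S2 := let: And3 _ g _ := H in g.
Let off : offeq S1 S2 := let: And3 _ _ o := H in o.

Lemma sep2E z u v : u != z -> v != z -> u != v ->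
  sepS S2 z u v = (S1 u z * S1 z v == S1 u v * S2 z z).
Proof.
move=> uz vz uv; have zv : z != v by rewrite eq_sym.
by rewrite /sepS (off uz) (off zv) (off uv).
Qed.

Lemma C1 z : internal S1 z -> S1 z z <= S2 z z.
Proof.
case/existsP => u /existsP[v /and4P[uz vz uv /eqP s]].
case: (cratio G2 uz vz uv) => t [/andP[t0 t1] e].
have zv : z != v by rewrite eq_sym.
rewrite (off uz) (off zv) (off uv) s in e.
have hX : S1 u v != 0 := nz_all G1 u v.
have e' : S1 z z = t * S2 z z.
  by apply: (mulfI hX); rewrite e; ring.
have h2 := diag_pos G2 z.
rewrite e'; nra.
Qed.
End P1.

Section P2.
Variables (R : realType) (n : nat) (S1 S2 : 'M[R]_n).
Hypothesis H : pairH S1 S2.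
Let G1 : good S1 := let: And3 g _ _ := H in g.
Let G2 : good S2 := let: And3 _ g _ := H in g.
Let off : offeq S1 S2 := let: And3 _ _ o := H in o.

Lemma C1eq z : internal S1 z -> internal S2 z -> S1 z z = S2 z z.
Proof. by move=> i1 i2; apply/le_anti; rewrite (C1 H i1) (C1 (pairH_sym H) i2). Qed.

Lemma sepU z u v : S1 z z = S2 z z -> u != z -> v != z -> u != v ->
  sepS S2 z u v = sepS S1 z u v.
Proof. by move=> e uz vz uv; rewrite (sep2E H uz vz uv) -e. Qed.

Definition Bset := [pred b | ~~ internal S1 b && internal S2 b].

Lemma B_ex b : b \in Bset -> exists u, u != b.
Proof.
by case/andP => _ /existsP[u /existsP[v /and4P[ub _ _ _]]]; exists u.
Qed.

Lemma C2 b : b \in Bset -> internal S1 (nb S1 b) && ~~ internal S2 (nb S1 b).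
Proof.
move=> bB; have ex := B_ex bB.
case/andP: bB => ni1 i2.
case: (leaf_of G1 ni1 ex) => Tbp lf.
set p := nb S1 b in Tbp lf *.
have bp : b != p := Tneq Tbp.
have hsep := leaf_sep G1 lf Tbp.
have [y yb yp] : exists2 y, y != b & y != p.
  case/existsP: (i2) => u /existsP[v /and4P[ub vb uv _]].
  case: (eqVneq u p) => [up|up]; last by exists u.
  by exists v => //; rewrite -up eq_sym.
have i1p : internal S1 p.
  apply/existsP; exists b; apply/existsP; exists y.
  by rewrite bp yp (eq_sym b) yb hsep.
rewrite i1p /=; apply/negP => i2p.
have e := C1eq i1p i2p.
have lf2 : forall y, ci_graph S2 b y -> y = p.
  move=> y' Tby'; apply/eqP; apply: contraT => y'p.
  have y'b : y' != b by rewrite eq_sym (Tneq Tby').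
  move: Tby'; rewrite (edgeE G2) => /andP[_ /forallP /(_ p)].
  by rewrite eq_sym bp eq_sym y'p /= (sepU e) // ?hsep // eq_sym.
by move: (leaf_noint G2 lf2); rewrite i2.
Qed.
End P2.

Section P3.
Variables (R : realType) (n : nat) (S1 S2 : 'M[R]_n).
Hypothesis H : pairH S1 S2.
Let G1 : good S1 := let: And3 g _ _ := H in g.
Let G2 : good S2 := let: And3 _ g _ := H in g.
Let off : offeq S1 S2 := let: And3 _ _ o := H in o.

Lemma C4 b : b \in Bset S1 S2 -> nb S2 (nb S1 b) = b.
Proof.
move=> bB; have ex := B_ex bB.
have /andP[i1p ni2p] := C2 H bB.
case/andP: (bB) => ni1 i2.
case: (leaf_of G1 ni1 ex) => Tbp lfb.
move: i1p ni2p Tbp lfb; set p := nb S1 b => i1p ni2p Tbp lfb.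
have bp : b != p := Tneq Tbp.
have pb : p != b by rewrite eq_sym.
case: (leaf_of G2 ni2p (ex_intro _ b bp)) => Tpq lfp.
move: Tpq lfp; set q := nb S2 p => Tpq lfp.
have pq : p != q := Tneq Tpq.
have qp : q != p by rewrite eq_sym.
have pA : p \in Bset S2 S1 by rewrite inE /= ni2p i1p.
have /andP[i2q ni1q] := C2 (pairH_sym H) pA.
rewrite -/q in i2q ni1q.
apply/eqP; apply: contraT => qb.
have bq : b != q by rewrite eq_sym.
have hsep1 := leaf_sep G1 lfb Tbp.
have hsep2 := leaf_sep G2 lfp Tpq.
have nz := nz_all G1.
have d1 := diag_neq0 G1; have d2 := diag_neq0 G2.
have h1 : S1 p q * S1 q b = S1 p b * S2 q q.
  by apply/eqP; rewrite -(sep2E H) // hsep2.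
have f1 : S1 p b * S1 p q = S1 b q * S1 p p.
  by apply/eqP; rewrite [S1 p b](S_sym G1); apply: hsep1.
have hq : forall y, y != p -> y != q -> sepS S1 p q y.
  move=> y yp yq; case: (eqVneq y b) => [->|yb].
    by rewrite (sep_sym G1); apply: hsep1.
  have py : p != y by rewrite eq_sym.
  have h2 : S1 p q * S1 q y = S1 p y * S2 q q.
    by apply/eqP; rewrite -(sep2E H) // hsep2.
  have h3 : S1 p b * S1 p q = S1 q b * S1 p p by rewrite f1 (S_sym G1 b q).
  rewrite /sepS [S1 q p](S_sym G1); apply/eqP.
  exact: (alg1 (nz p b) (d2 q) h1 h2 h3).
have Tqp : ci_graph S1 q p.
  case: (leaf_of G1 ni1q (ex_intro _ p pq)) => Tqr lfq.
  have rp : nb S1 q = p.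
    apply/eqP; apply: contraT => rp.
    move: (Tqr); rewrite (edgeE G1) => /andP[_ /forallP /(_ p)].
    by rewrite pq eq_sym rp /= hq // eq_sym (Tneq Tqr).
  by rewrite -rp.
case: (int_sepq G2 i2 pb) => y [yb yp sy].
have yq : y != q.
  apply/eqP => yq; rewrite yq in sy.
  move: Tpq; rewrite (edgeE G2) => /andP[_ /forallP /(_ b)].
  by rewrite bp bq sy.
have py : p != y by rewrite eq_sym.
have e2 : S1 p b * S1 b y = S1 p y * S2 b b.
  by apply/eqP; rewrite -(sep2E H).
have e3 : S1 p q * S1 b q = S1 p b * S2 q q by rewrite (S_sym G1 b q).
have f2 : S1 p b * S1 p y = S1 b y * S1 p p.
  by apply/eqP; rewrite [S1 p b](S_sym G1); apply: hsep1.
have := alg2 (d1 p) (nz b y) (nz p q) e2 e3 f1 f2.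
have := CS G2 bq; rewrite (off bq) => lt eq.
by move: lt; rewrite eq ltxx.
Qed.
End P3.

Section P4.
Variables (R : realType) (n : nat) (S1 S2 : 'M[R]_n).
Hypothesis H : pairH S1 S2.
Let G1 : good S1 := let: And3 g _ _ := H in g.
Let G2 : good S2 := let: And3 _ g _ := H in g.
Let off : offeq S1 S2 := let: And3 _ _ o := H in o.
Local Notation B := (Bset S1 S2).
Local Notation A := (Bset S2 S1).

Definition fsw x := if x \in B then nb S1 x else if x \in A then nb S2 x else x.

Lemma AB_disj x : x \in B -> x \notin A.
Proof. by rewrite !inE /= => /andP[/negbTE -> _]; rewrite andbF. Qed.

Lemma nbB x : x \in B -> nb S1 x \in A.
Proof. by move/(C2 H); rewrite inE /= andbC. Qed.

Lemma nbA x : x \in A -> nb S2 x \in B.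
Proof. by move/(C2 (pairH_sym H)); rewrite inE /= andbC. Qed.

Lemma fsw_B x : x \in B -> fsw x = nb S1 x.
Proof. by rewrite /fsw => ->. Qed.

Lemma fsw_A x : x \in A -> fsw x = nb S2 x.
Proof. by move=> xA; rewrite /fsw xA; case: ifP => // xB; move: (AB_disj xB); rewrite xA. Qed.

Lemma fsw_id x : x \notin B -> x \notin A -> fsw x = x.
Proof. by rewrite /fsw => /negbTE -> /negbTE ->. Qed.

Lemma fK : involutive fsw.
Proof.
move=> x; case: (boolP (x \in B)) => xB.
  by rewrite (fsw_B xB) (fsw_A (nbB xB)) (C4 H xB).
case: (boolP (x \in A)) => xA; last by rewrite !fsw_id.
by rewrite (fsw_A xA) (fsw_B (nbA xA)) (C4 (pairH_sym H) xA).
Qed.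

Lemma finj : injective fsw.
Proof. exact: (can_inj fK). Qed.

Lemma leafB x : x \in B -> ci_graph S1 x (fsw x) /\ forall y, ci_graph S1 x y -> y = fsw x.
Proof.
move=> xB; rewrite (fsw_B xB); apply: leaf_of G1 _ (B_ex xB).
by case/andP: xB.
Qed.

Lemma leafA x : x \in A -> ci_graph S1 (fsw x) x /\ forall y, ci_graph S1 (fsw x) y -> y = x.
Proof.
move=> xA; have := leafB (nbA xA); rewrite (fsw_B (nbA xA)) (C4 (pairH_sym H) xA).
by rewrite (fsw_A xA).
Qed.

Lemma leafA2 x : x \in A -> ci_graph S2 x (fsw x) /\ forall y, ci_graph S2 x y -> y = fsw x.
Proof.
move=> xA; rewrite (fsw_A xA); apply: leaf_of G2 _ (B_ex xA).
by case/andP: xA.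
Qed.

Lemma Sa b p w y : ci_graph S1 b p -> (forall y, ci_graph S1 b y -> y = p) ->
  w != b -> w != p -> y != w -> y != b -> y != p ->
  sepS S1 w b y = sepS S1 w p y.
Proof.
move=> Tbp lf wb wp yw yb yp.
have h1 := leaf_sep G1 lf Tbp wb wp.
have h2 := leaf_sep G1 lf Tbp yb yp.
rewrite /sepS in h1 h2 *.
exact: (alg3 (S1 w y) (S1 w w) (diag_neq0 G1 p) (nz_all G1 b p) (eqP h1) (eqP h2)).
Qed.


Lemma SS x w y : w != x -> w != fsw x -> y != w -> y != x -> y != fsw x ->
  sepS S1 w (fsw x) y = sepS S1 w x y.
Proof.
move=> wx wfx yw yx yfx.
case: (boolP (x \in B)) => xB.
  case: (leafB xB) => Tx lf; symmetry; exact: (Sa Tx lf wx wfx yw yx yfx).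
case: (boolP (x \in A)) => xA; last by rewrite (fsw_id xB xA).
case: (leafA xA) => Tx lf; exact: (Sa Tx lf wfx wx yw yfx yx).
Qed.

Lemma Inv w u v : w != u -> w != v -> u != v -> fsw u != w -> fsw v != w ->
  sepS S1 w (fsw u) (fsw v) = sepS S1 w u v.
Proof.
move=> wu wv uv fuw fvw.
case: (eqVneq v (fsw u)) => [vfu|vfu].
  by rewrite vfu (fK u) (sep_sym G1).
have fvu : fsw v != u by apply: contra_neq vfu => <-; rewrite fK.
have fvfu : fsw v != fsw u by rewrite (inj_eq finj) eq_sym.
have wfu : w != fsw u by rewrite eq_sym.
have wfv : w != fsw v by rewrite eq_sym.
have uw : u != w by rewrite eq_sym.
have ufv : u != fsw v by rewrite eq_sym.
rewrite (SS wu wfu fvw fvu fvfu) (sep_sym G1 w u (fsw v)).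
by rewrite (SS wv wfv uw uv ufv) (sep_sym G1).
Qed.

Lemma Klem x y1 y2 : x \in A -> y1 != x -> y1 != fsw x -> y2 != x -> y2 != fsw x ->
  y1 != y2 -> sepS S2 (fsw x) y1 y2 = sepS S1 x y1 y2.
Proof.
move=> xA y1x y1b y2x y2b y12.
case: (leafA xA) => T1bp lf1.
case: (leafA2 xA) => T2pb lf2.
move: T1bp lf1 T2pb lf2 y1b y2b; set b := fsw x => T1bp lf1 T2pb lf2 y1b y2b.
have xb : x != b := Tneq T2pb.
have xy1 : x != y1 by rewrite eq_sym.
have e1 : S1 x b * S1 y1 b = S1 y1 x * S2 b b.
  have := leaf_sep G2 lf2 T2pb y1x y1b; rewrite (sep2E H xb y1b xy1) => /eqP.
  by rewrite [S1 b y1](S_sym G1) [S1 x y1](S_sym G1).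
have h2 : S1 x b * S1 y1 x = S1 y1 b * S1 x x.
  have := leaf_sep G1 lf1 T1bp y1b y1x; rewrite /sepS => /eqP.
  by rewrite [S1 b x](S_sym G1) [S1 x y1](S_sym G1) [S1 b y1](S_sym G1).
have h3 : S1 x b * S1 x y2 = S1 b y2 * S1 x x.
  have := leaf_sep G1 lf1 T1bp y2b y2x; rewrite /sepS => /eqP.
  by rewrite [S1 b x](S_sym G1).
rewrite (sep2E H y1b y2b y12) /sepS.
exact: (alg4 (S1 y1 y2) (diag_neq0 G1 x) (nz_all G1 x b) (nz_all G1 y1 x) e1 h2 h3).
Qed.

Lemma transfer w u v : w != u -> w != v -> u != v ->
  sepS S2 (fsw w) (fsw u) (fsw v) = sepS S1 w u v.
Proof.
move=> wu wv uv.
have fuw : fsw u != fsw w by rewrite (inj_eq finj) eq_sym.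
have fvw : fsw v != fsw w by rewrite (inj_eq finj) eq_sym.
have fuv : fsw u != fsw v by rewrite (inj_eq finj).
have uw : u != w by rewrite eq_sym.
have vw : v != w by rewrite eq_sym.
case: (boolP (w \in B)) => wB.
  have ni2 : ~~ internal S2 (fsw w).
    by rewrite (fsw_B wB); case/andP: (nbB wB).
  have ni1 : ~~ internal S1 w by case/andP: wB.
  by rewrite (noint_sep ni2 fuw fvw fuv) (noint_sep ni1 uw vw uv).
case: (boolP (w \in A)) => wA.
  case: (leafA wA) => T1qw lf1.
  case: (leafA2 wA) => T2wq lf2.
  have key : forall v, v != fsw w -> v != w ->
      sepS S2 (fsw w) w (fsw v) /\ sepS S1 w (fsw w) v.
    move=> v' v'q v'w.
    have fv'w : fsw v' != w by apply: contra_neq v'q => <-; rewrite fK.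
    have fv'q : fsw v' != fsw w by rewrite (inj_eq finj).
    by split; [apply: (leaf_sep G2 lf2 T2wq) | apply: (leaf_sep G1 lf1 T1qw)].
  case: (eqVneq u (fsw w)) => [uq|uq].
    have vq : v != fsw w by rewrite -uq eq_sym.
    case: (key v vq vw) => k1 k2.
    by rewrite uq fK k1 k2.
  case: (eqVneq v (fsw w)) => [vq|vq].
    case: (key u uq uw) => k1 k2.
    by rewrite vq fK (sep_sym G2) (sep_sym G1) k1 k2.
  have fuq : fsw u != fsw w by rewrite (inj_eq finj).
  have fu_w' : fsw u != w by apply: contra_neq uq => <-; rewrite fK.
  have fv_w : fsw v != w by apply: contra_neq vq => <-; rewrite fK.
  rewrite (Klem wA fu_w' fuw fv_w fvw fuv).
  exact: Inv.
have fww := fsw_id wB wA.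
have fu_w : fsw u != w by apply: contra_neq uw => h; rewrite -(fK u) h fww.
have fv_w : fsw v != w by apply: contra_neq vw => h; rewrite -(fK v) h fww.
rewrite fww.
have e : sepS S2 w (fsw u) (fsw v) = sepS S1 w (fsw u) (fsw v).
  case: (boolP (internal S1 w)) => i1.
    have i2 : internal S2 w by apply: contraNT wA => ni2; rewrite inE /= ni2 i1.
    exact: (sepU H (C1eq H i1 i2) fu_w fv_w fuv).
  have ni2 : ~~ internal S2 w by apply: contraNN wB => i2; rewrite inE /= i1 i2.
  by rewrite (noint_sep ni2 fu_w fv_w fuv) (noint_sep i1 fu_w fv_w fuv).
by rewrite e Inv.
Qed.

Lemma edgeT u v : ci_graph S2 (fsw u) (fsw v) = ci_graph S1 u v.
Proof.
rewrite (edgeE G2) (edgeE G1) (inj_eq finj).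
case: (eqVneq u v) => //= uv.
apply/forallP/forallP => h z; apply/implyP => /andP[zu zv].
  have := h (fsw z); rewrite !(inj_eq finj) zu zv /=.
  by rewrite (transfer zu zv uv).
have e1 : (fsw z != u) = (z != fsw u) by rewrite -(inj_eq finj) fK.
have e2 : (fsw z != v) = (z != fsw v) by rewrite -(inj_eq finj) fK.
have := h (fsw z); rewrite e1 e2 zu zv /=.
have zu' : fsw z != u by rewrite e1.
have zv' : fsw z != v by rewrite e2.
by rewrite -(transfer zu' zv' uv) fK.
Qed.
End P4.


Unset Implicit Arguments. Set Strict Implicit.

Theorem theorem2 (R : realType) (n : nat)
    (Sstar Dstar S' D' : 'M[R]_n) :
  posdef Sstar -> is_tree (ci_graph Sstar) -> nonneg_diag Dstar ->
  posdef S' -> is_tree (ci_graph S') -> nonneg_diag D' ->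
  Sstar + Dstar = S' + D' ->
  in_swap_family (ci_graph Sstar) (ci_graph S').
Proof.
move=> PS TS ND PS' TS' ND' E.
have off : offeq Sstar S'.
  move=> x y xy; have := congr1 (fun M : 'M[R]_n => M x y) E; rewrite !mxE.
  have d1 : Dstar x y = 0.
    by apply/eqP; move: ND.1 => /forallP/(_ x)/forallP/(_ y)/implyP; apply.
  have d2 : D' x y = 0.
    by apply/eqP; move: ND'.1 => /forallP/(_ x)/forallP/(_ y)/implyP; apply.
  by rewrite d1 d2 !addr0 => ->.
have H : pairH Sstar S' by split.
pose f := fsw Sstar S'.
exists [set b | b \in Bset Sstar S']; split.
- move=> a; rewrite inE => aB; case: (leafB H aB) => Ta lf.
  rewrite /is_leaf; apply/eqP.
  rewrite (_ : [set b | _] = [set f a]) ?cards1 //.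
  by apply/setP => y; rewrite !inE; apply/idP/eqP => [/lf //|->].
- move=> a a' c; rewrite !inE => aB a'B aa' Tac; apply/negP => Ta'c.
  case: (leafB H aB) => _ lf; case: (leafB H a'B) => _ lf'.
  by move: aa'; rewrite (finj H (etrans (esym (lf _ Tac)) (lf' _ Ta'c))) eqxx.
exists (perm (finj H)); split.
- move=> a b; rewrite inE => aB Tab; rewrite !permE.
  case: (leafB H aB) => _ lf; rewrite (lf _ Tab); split => //.
  exact: fK H a.
- move=> v; rewrite inE => vB hv; rewrite permE.
  case: (boolP (v \in Bset S' Sstar)) => vA; last exact: fsw_id vB vA.
  case: (leafA H vA) => Tqv _.
  have qB : fsw Sstar S' v \in Bset Sstar S' by rewrite (fsw_A vA) (nbA H vA).
  have qS : fsw Sstar S' v \in [set b | b \in Bset Sstar S'] by rewrite inE.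
  by move: (hv _ qS); rewrite Tqv.
- by move=> i j; rewrite !permE edgeT.
Qed.
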